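(* Let $\eta\colon K[x]\to\Gamma'\cup\{\infty\}$ be a valuation extending $v$, with respect to some order-preserving embedding $\iota\colon\Gamma\hookrightarrow\Gamma'$ of ordered abelian groups, and embed $\Gamma_{\mathbb Q}\hookrightarrow\Gamma'_{\mathbb Q}$ via $\iota\otimes\mathbb Q$. Then the following are equivalent: (1) $\eta(f)\le\mu(f)$ for all $f\in K[x]$ and all $\mu\in\mathbb V$; (2) $\eta(x)<\gamma$ for all $\gamma\in\Gamma_{\mathbb Q}$; (3) $\eta$ is equivalent to $\mu_{-\infty}$.
   Context: Let $(K,v)$ be a valued field with non-trivial value group $\Gamma=v(K^* )$, and let $\Gamma_{\mathbb Q}=\Gamma\otimes\mathbb Q$ with its induced order (similarly $\Gamma'_{\mathbb Q}=\Gamma'\otimes\mathbb Q$). Let $\mathbb V$ be the set of valuations $\mu\colon K[x]\to\Gamma_{\mathbb Q}\cup\{\infty\}$ whose restriction to $K$ is $v$. The valuation $\mu_{-\infty}\colon K[x]\to(\mathbb Z\times\Gamma)_{\mathrm{lex}}\cup\{\infty\}$ is $f\mapsto(-\deg f,\,v(\mathrm{lc}(f)))$, where $\mathrm{lc}(f)$ is the leading coefficient and $(\mathbb Z\times\Gamma)_{\mathrm{lex}}$ has the lexicographic order. Two valuations $\eta,\eta'$ on $K[x]$ are equivalent if there is an order-preserving group isomorphism $j$ between their value groups with $\eta=j\circ\eta'$ on $K[x]\setminus\{0\}$. *)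

(* Defs.v *)
From mathcomp Require Import all_boot all_order all_algebra.
Set Implicit Arguments. Unset Strict Implicit. Unset Printing Implicit Defensive.
Import Order.TTheory GRing.Theory Num.Theory.
Local Open Scope ring_scope.

Definition is_oag (G : zmodType) (le : rel G) : Prop :=
  [/\ reflexive le, transitive le, antisymmetric le, total le &
      forall x y z : G, le x y -> le (x + z) (y + z)].

Definition ltof (T : eqType) (le : rel T) (x y : T) : bool := le x y && (x != y).

(* G ∪ {∞} is modelled by [option G], with [None] = ∞. *)
Definition ole (G : Type) (le : rel G) (a b : option G) : bool :=
  match a, b with
  | _, None => true
  | None, Some _ => false
  | Some x, Some y => le x y
  end.

Definition oadd (G : zmodType) (a b : option G) : option G :=
  match a, b with
  | Some x, Some y => Some (x + y)
  | _, _ => None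
  end.

Definition omin (G : Type) (le : rel G) (a b : option G) : option G :=
  if ole le a b then a else b.

Definition is_valuation (R : nzRingType) (G : zmodType) (le : rel G)
    (w : R -> option G) : Prop :=
  [/\ forall a, w a = None <-> a = 0,
      w 1 = Some 0,
      forall a b, w (a * b) = oadd (w a) (w b) &
      forall a b, ole le (omin le (w a) (w b)) (w (a + b))].

(* (H, leH, j) is the divisible hull G ⊗ Q of the ordered abelian group
   (G, leG), with its induced order, j : G -> G ⊗ Q being g |-> g ⊗ 1. *)
Definition divisible_hull (G H : zmodType) (leG : rel G) (leH : rel H)
    (j : G -> H) : Prop :=
  [/\ is_oag leH,
      forall x y, j (x + y) = j x + j y,
      forall x y, leH (j x) (j y) = leG x y,
      forall (h : H) (n : nat), (0 < n)%N -> exists h' : H, h' *+ n = h &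
      forall h : H, exists n : nat, (0 < n)%N /\ exists g : G, j g = h *+ n].

(* The value group of a valuation w on R: the subgroup of G generated by
   w(R \ {0}), i.e. the set of differences w a - w b with a, b nonzero. *)
Definition value_group (R : nzRingType) (G : zmodType) (w : R -> option G)
    (g : G) : Prop :=
  exists a b : R, exists x y : G,
    [/\ a != 0, b != 0, w a = Some x, w b = Some y & g = x - y].

Definition equiv_val (R : nzRingType) (G1 G2 : zmodType)
    (le1 : rel G1) (w1 : R -> option G1)
    (le2 : rel G2) (w2 : R -> option G2) : Prop :=
  exists J : G2 -> G1,
    [/\ forall x y, value_group w2 x -> value_group w2 y -> J (x + y) = J x + J y,
        forall x y, value_group w2 x -> value_group w2 y -> le1 (J x) (J y) = le2 x y,
        forall x, value_group w2 x -> value_group w1 (J x),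
        forall y, value_group w1 y -> exists2 x, value_group w2 x & J x = y &
        forall f, f != 0 -> w1 f = omap J (w2 f)].

Definition lexle (G : zmodType) (le : rel G) (a b : int * G) : bool :=
  (a.1 < b.1) || ((a.1 == b.1) && le a.2 b.2).

Definition mu_minf (K : fieldType) (G : zmodType) (v : K -> option G)
    (f : {poly K}) : option (int * G) :=
  omap (fun g => (- ((size f).-1)%:Z, g)) (v (lead_coef f)).

(* Main.v *)
Require Import Defs.
From mathcomp Require Import all_boot all_order all_algebra.
Import Order.TTheory GRing.Theory Num.Theory.
Local Open Scope ring_scope.

Section OAG.
Variables (G : zmodType) (le : rel G) (hG : is_oag le).

Definition lt (x y : G) := le x y && (x != y).

Lemma le_refl x : le x x. Proof. by case: hG => r _ _ _ _; apply: r. Qed.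
Lemma le_trans x y z : le x y -> le y z -> le x z.
Proof. by case: hG => _ t _ _ _ h1 h2; apply: t h1 h2. Qed.
Lemma le_anti x y : le x y -> le y x -> x = y.
Proof. by case: hG => _ _ a _ _ h1 h2; apply: a; rewrite h1 h2. Qed.
Lemma le_total x y : le x y || le y x.
Proof. by case: hG => _ _ _ t _; apply: t. Qed.
Lemma leDr x y z : le x y -> le (x + z) (y + z).
Proof. by case: hG => _ _ _ _ m; apply: m. Qed.
Lemma leDl x y z : le x y -> le (z + x) (z + y).
Proof. by rewrite ![z + _]addrC; apply: leDr. Qed.
Lemma le2Dr x y z : le (x + z) (y + z) = le x y.
Proof.
apply/idP/idP; last exact: leDr.
by move/(leDr _ _ (- z)); rewrite !addrK.
Qed.
Lemma le2Dl x y z : le (z + x) (z + y) = le x y.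
Proof. by rewrite ![z + _]addrC le2Dr. Qed.
Lemma leD a b c d : le a b -> le c d -> le (a + c) (b + d).
Proof. move=> h1 h2; apply: le_trans _ _ _ (leDr _ _ _ h1) (leDl _ _ _ h2). Qed.
Lemma lt_nle x y : lt x y = ~~ le y x.
Proof.
rewrite /lt; case: (eqVneq x y) => [->|nxy]; first by rewrite le_refl.
rewrite andbT; case h: (le x y); case h': (le y x) => //.
  by move: nxy; rewrite (le_anti _ _ h h') eqxx.
by move: (le_total x y); rewrite h h'.
Qed.
Lemma le_nlt x y : le x y = ~~ lt y x.
Proof. by rewrite lt_nle negbK. Qed.
Lemma ltW x y : lt x y -> le x y. Proof. by case/andP. Qed.
Lemma lt_irr x : lt x x = false. Proof. by rewrite /lt eqxx andbF. Qed.
Lemma lt_le_trans x y z : lt x y -> le y z -> lt x z.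
Proof.
rewrite !lt_nle => h1 h2; apply/negP => h3; by rewrite (le_trans _ _ _ h2 h3) in h1.
Qed.
Lemma le_lt_trans x y z : le x y -> lt y z -> lt x z.
Proof.
rewrite !lt_nle => h1 h2; apply/negP => h3; by rewrite (le_trans _ _ _ h3 h1) in h2.
Qed.
Lemma ltDr x y z : lt x y -> lt (x + z) (y + z).
Proof. by rewrite !lt_nle le2Dr. Qed.
Lemma lt2Dr x y z : lt (x + z) (y + z) = lt x y.
Proof. by rewrite !lt_nle le2Dr. Qed.
Lemma lt2Dl x y z : lt (z + x) (z + y) = lt x y.
Proof. by rewrite !lt_nle le2Dl. Qed.
Lemma ltD a b c d : lt a b -> le c d -> lt (a + c) (b + d).
Proof. move=> h1 h2; apply: lt_le_trans _ _ _ (ltDr _ _ _ h1) (leDl _ _ _ h2). Qed.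
Lemma le_subr x y : le x y = le 0 (y - x).
Proof. by rewrite -(le2Dr x y (- x)) subrr. Qed.
Lemma lt_subr x y : lt x y = lt 0 (y - x).
Proof. by rewrite !lt_nle le_subr [in RHS]le_subr sub0r opprB. Qed.
Lemma le_oppr x y : le (- x) (- y) = le y x.
Proof. by rewrite le_subr opprK addrC -le_subr. Qed.
Lemma lt_oppr x y : lt (- x) (- y) = lt y x.
Proof. by rewrite !lt_nle le_oppr. Qed.
Lemma leMn x y n : le x y -> le (x *+ n) (y *+ n).
Proof.
move=> h; elim: n => [|n ih]; first by rewrite !mulr0n le_refl.
by rewrite !mulrS leD.
Qed.
Lemma ltMn x y n : (0 < n)%N -> lt x y -> lt (x *+ n) (y *+ n).
Proof.
case: n => // n _ h; elim: n => [|n ih]; first by rewrite !mulr1n.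
by rewrite mulrS [y *+ _]mulrS ltD // ltW.
Qed.
Lemma le2Mn x y n : (0 < n)%N -> le (x *+ n) (y *+ n) = le x y.
Proof.
move=> n0; apply/idP/idP; last exact: leMn.
by rewrite !le_nlt; apply: contra; apply: ltMn.
Qed.
Lemma lt2Mn x y n : (0 < n)%N -> lt (x *+ n) (y *+ n) = lt x y.
Proof. by move=> n0; rewrite !lt_nle le2Mn. Qed.
Lemma Mn_inj (x y : G) n : (0 < n)%N -> x *+ n = y *+ n -> x = y.
Proof.
move=> n0 e; apply: le_anti; rewrite -(le2Mn _ _ _ n0) e le_refl //.
Qed.
End OAG.
Arguments lt {G}.
Arguments le_refl {G le}.
Arguments le_trans {G le}.
Arguments le_anti {G le}.
Arguments le_total {G le}.
Arguments leDr {G le}.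
Arguments leDl {G le}.
Arguments le2Dr {G le}.
Arguments le2Dl {G le}.
Arguments leD {G le}.
Arguments lt_nle {G le}.
Arguments le_nlt {G le}.
Arguments ltW {G le}.
Arguments lt_irr {G le}.
Arguments lt_le_trans {G le}.
Arguments le_lt_trans {G le}.
Arguments ltDr {G le}.
Arguments lt2Dr {G le}.
Arguments lt2Dl {G le}.
Arguments ltD {G le}.
Arguments le_subr {G le}.
Arguments lt_subr {G le}.
Arguments le_oppr {G le}.
Arguments lt_oppr {G le}.
Arguments leMn {G le}.
Arguments ltMn {G le}.
Arguments le2Mn {G le}.
Arguments lt2Mn {G le}.
Arguments Mn_inj {G le}.

Section Morph.
Variables (G H : zmodType) (leG : rel G) (leH : rel H) (f : G -> H).
Hypothesis hG : is_oag leG.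
Hypothesis hH : is_oag leH.
Hypothesis fadd : forall x y, f (x + y) = f x + f y.
Hypothesis fle : forall x y, leH (f x) (f y) = leG x y.
Lemma f0 : f 0 = 0.
Proof. by apply: (addrI (f 0)); rewrite -fadd !addr0. Qed.
Lemma fN x : f (- x) = - f x.
Proof. by apply/eqP; rewrite -addr_eq0 -fadd addNr f0. Qed.
Lemma fB x y : f (x - y) = f x - f y.
Proof. by rewrite fadd fN. Qed.
Lemma fMn x n : f (x *+ n) = f x *+ n.
Proof. by elim: n => [|n ih]; rewrite ?mulr0n ?f0 // !mulrS fadd ih. Qed.
Lemma finj x y : f x = f y -> x = y.
Proof. move=> e; apply: (@le_anti _ _ hG); by rewrite -fle e le_refl. Qed.
Lemma flt x y : lt leH (f x) (f y) = lt leG x y.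
Proof. by rewrite !(lt_nle hH) !(lt_nle hG) fle. Qed.
End Morph.

Section Opt.
Variables (G : zmodType) (le : rel G) (hG : is_oag le).
Implicit Types a b c d : option G.

Lemma ole_refl a : ole le a a.
Proof. by case: a => //= x; apply: le_refl hG x. Qed.
Lemma ole_trans a b c : ole le a b -> ole le b c -> ole le a c.
Proof. by case: a; case: b; case: c => //= x y z; apply: le_trans. Qed.
Lemma ole_anti a b : ole le a b -> ole le b a -> a = b.
Proof. by case: a; case: b => //= x y h1 h2; rewrite (le_anti hG _ _ h2 h1). Qed.
Lemma ole_total a b : ole le a b || ole le b a.
Proof. by case: a; case: b => //= x y; apply: le_total. Qed.
Lemma omin_l a b : ole le (omin le a b) a.
Proof.
rewrite /omin; case h: (ole le a b); first exact: ole_refl.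
by move: (ole_total a b); rewrite h.
Qed.
Lemma omin_r a b : ole le (omin le a b) b.
Proof. by rewrite /omin; case h: (ole le a b) => //; exact: ole_refl. Qed.
Lemma omin_glb a b c : ole le c a -> ole le c b -> ole le c (omin le a b).
Proof. by rewrite /omin; case: (ole le a b). Qed.
Lemma omin_cases a b : omin le a b = a \/ omin le a b = b.
Proof. by rewrite /omin; case: (ole le a b); [left|right]. Qed.
Lemma oadd_le a b c d : ole le a b -> ole le c d -> ole le (oadd a c) (oadd b d).
Proof.
case: a; case: b; case: c; case: d => //= *; exact: leD.
Qed.
Definition olt c d := ~~ ole le d c.
Lemma olt_ole c d : olt c d -> ole le c d.
Proof. by rewrite /olt => h; move: (ole_total c d); rewrite (negbTE h) orbF. Qed.
Lemma olt_irr c : olt c c = false.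
Proof. by rewrite /olt ole_refl. Qed.
End Opt.
Arguments olt {G}.
Arguments omin_cases {G}.
Arguments ole_refl {G le}.
Arguments ole_trans {G le}.
Arguments ole_anti {G le}.
Arguments ole_total {G le}.
Arguments omin_l {G le}.
Arguments omin_r {G le}.
Arguments omin_glb {G le}.
Arguments olt_ole {G le}.
Arguments olt_irr {G le}.
Arguments oadd_le {G le}.

Section Val.
Variables (G : zmodType) (le : rel G) (hG : is_oag le).
Variables (R : nzRingType) (w : R -> option G) (hw : is_valuation le w).

Lemma w0 : w 0 = None. Proof. by case: hw => h _ _ _; apply/h. Qed.
Lemma wnz a : a != 0 -> exists x, w a = Some x.
Proof.
case: hw => h _ _ _ nz; case e: (w a) => [x|]; first by exists x.
by move/h: e => e; rewrite e eqxx in nz.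
Qed.
Lemma wM a b : w (a * b) = oadd (w a) (w b). Proof. by case: hw. Qed.
Lemma w1 : w 1 = Some 0. Proof. by case: hw. Qed.
Lemma wult a b : ole le (omin le (w a) (w b)) (w (a + b)). Proof. by case: hw. Qed.
Lemma wN1 : w (-1) = Some 0.
Proof.
have nz : (-1 : R) != 0 by rewrite oppr_eq0 oner_neq0.
case: (wnz _ nz) => x e; rewrite e; congr Some.
have := wM (-1) (-1); rewrite mulrNN mulr1 w1 e /= => [[]] e2.
apply: (Mn_inj hG x 0 2) => //; by rewrite mulr2n -e2 mul0rn.
Qed.
Lemma wN a : w (- a) = w a.
Proof. by rewrite -mulN1r wM wN1; case: (w a) => //= x; rewrite add0r. Qed.
Lemma w_add_ge c a b : ole le c (w a) -> ole le c (w b) -> ole le c (w (a + b)).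
Proof.
move=> h1 h2; apply: ole_trans hG _ _ _ _ (wult a b).
exact: omin_glb.
Qed.
Lemma w_add_gt c a b : olt le c (w a) -> olt le c (w b) -> olt le c (w (a + b)).
Proof.
move=> h1 h2; apply/negP => h3.
have h4 := ole_trans hG _ _ _ (wult a b) h3.
by case: (omin_cases le (w a) (w b)) => e; rewrite e in h4; [move: h1|move: h2]; rewrite /olt h4.
Qed.
Lemma w_sum_ge c (I : Type) (r : seq I) (P : pred I) (F : I -> R) :
  (forall i, P i -> ole le c (w (F i))) -> ole le c (w (\sum_(i <- r | P i) F i)).
Proof.
move=> h; apply: (big_ind (fun x => ole le c (w x))) => //.
  by rewrite w0; case: c {h}.
by move=> x y; apply: w_add_ge.
Qed.
Lemma w_sum_gt d (I : Type) (r : seq I) (P : pred I) (F : I -> R) :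
  (forall i, P i -> olt le (Some d) (w (F i))) ->
  olt le (Some d) (w (\sum_(i <- r | P i) F i)).
Proof.
move=> h; apply: (big_ind (fun x => olt le (Some d) (w x))) => //.
  by rewrite w0.
by move=> x y; apply: w_add_gt.
Qed.
Lemma w_dom a b d : w a = Some d -> olt le (Some d) (w b) -> w (a + b) = Some d.
Proof.
move=> ea hb; apply: (ole_anti hG).
  apply/negP => h.
  have : olt le (Some d) (w (a + b + - b)).
    by apply: w_add_gt; [apply/negP; exact h | rewrite wN].
  by rewrite addrK ea olt_irr.
apply: w_add_ge; first by rewrite ea ole_refl.
exact: olt_ole.
Qed.
Lemma wXn a x n : w a = Some x -> w (a ^+ n) = Some (x *+ n).
Proof.
move=> e; elim: n => [|n ih]; first by rewrite expr0 w1 mulr0n.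
by rewrite exprS wM e ih /= mulrS.
Qed.
End Val.
Arguments w0 {G le R w}.
Arguments wnz {G le R w}.
Arguments wM {G le R w}.
Arguments w1 {G le R w}.
Arguments wult {G le R w}.
Arguments wXn {G le R w}.
Arguments wN1 {G le} hG {R w}.
Arguments wN {G le} hG {R w}.
Arguments w_add_ge {G le} hG {R w}.
Arguments w_add_gt {G le} hG {R w}.
Arguments w_sum_ge {G le} hG {R w}.
Arguments w_sum_gt {G le} hG {R w}.
Arguments w_dom {G le} hG {R w}.

Section Shift.
Variables (G : zmodType) (le : rel G) (hG : is_oag le).
Definition sh (t : G) (a : option G) := omap (fun x => x + t) a.
Lemma ole_sh t a b : ole le (sh t a) (sh t b) = ole le a b.
Proof. by case: a; case: b => //= x y; rewrite le2Dr. Qed.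
Lemma ole_Some_sh c t b : ole le (Some c) (sh t b) = ole le (Some (c - t)) b.
Proof. by case: b => //= x; rewrite -(le2Dr hG _ _ (-t)) addrK. Qed.
Lemma olt_Some_sh c t b : olt le (Some c) (sh t b) = olt le (Some (c - t)) b.
Proof. by rewrite /olt; case: b => //= x; rewrite -(le2Dr hG _ _ (-t)) addrK. Qed.
Lemma ole_neq_olt a b : ole le a b -> a != b -> olt le a b.
Proof.
move=> h1 h2; apply/negP => h3; by rewrite (ole_anti hG _ _ h1 h3) eqxx in h2.
Qed.
Lemma oadd_lt a c x y : olt le (Some a) x -> ole le (Some c) y ->
  olt le (Some (a + c)) (oadd x y).
Proof.
case: x; case: y => //= y x; rewrite /olt /= => h1 h2.
by rewrite -lt_nle // ltD // lt_nle.
Qed.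
Lemma subDD (A B x y : G) : (A - x) + (B - y) = A + B - (x + y).
Proof. by rewrite opprD addrACA. Qed.
End Shift.
Arguments sh {G}.
Arguments ole_sh {G le}.
Arguments ole_Some_sh {G le}.
Arguments olt_Some_sh {G le}.
Arguments ole_neq_olt {G le}.
Arguments oadd_lt {G le}.

Section Gauss.
Variables (K : fieldType) (G : zmodType) (le : rel G) (hG : is_oag le).
Variables (v : K -> option G) (hv : is_valuation le v) (g : G).

Definition term (f : {poly K}) (i : nat) := sh (g *+ i) (v f`_i).
Definition W (f : {poly K}) :=
  foldr (fun i acc => omin le (term f i) acc) None (iota 0 (size f)).

Lemma term_big (f : {poly K}) i : (size f <= i)%N -> term f i = None.
Proof. by move=> h; rewrite /term nth_default // (w0 hv). Qed.

Lemma W_lb (f : {poly K}) i : ole le (W f) (term f i).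
Proof.
case: (ltnP i (size f)) => hi; last by rewrite term_big //; case: (W f).
rewrite /W; have : i \in iota 0 (size f) by rewrite mem_iota.
elim: (iota 0 (size f)) => // x s ih; rewrite in_cons => /orP [/eqP ->|/ih h] /=.
  exact: omin_l.
exact: ole_trans hG _ _ _ (omin_r hG _ _) h.
Qed.

Lemma W_glb (f : {poly K}) c : (forall i, ole le c (term f i)) -> ole le c (W f).
Proof.
move=> h; rewrite /W; elim: (iota 0 (size f)) => [|x s ih] /=.
  by case: c {h}.
exact: omin_glb.
Qed.

Lemma W_att (f : {poly K}) : exists i, W f = term f i.
Proof.
rewrite /W; elim: (iota 0 (size f)) => [|x s [j ih]] /=.
  by exists (size f); rewrite term_big.
case: (omin_cases le (term f x) (foldr (fun i acc => omin le (term f i) acc) None s)) => ->.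
  by exists x.
by exists j.
Qed.

Lemma W_eq (f : {poly K}) c : (forall i, ole le c (term f i)) -> (exists i, term f i = c) -> W f = c.
Proof.
move=> h [i e]; apply: (ole_anti hG); last exact: W_glb.
by rewrite -e; apply: W_lb.
Qed.

Lemma W0 : W 0 = None.
Proof. by rewrite /W size_poly0. Qed.

Lemma WC c : W c%:P = v c.
Proof.
apply: W_eq; last by exists 0%N; rewrite /term coefC /=; case: (v c) => //= x; rewrite mulr0n addr0.
move=> [|i]; first by rewrite /term coefC /=; case: (v c) => //= x; rewrite mulr0n addr0 le_refl.
by rewrite /term coefC /= (w0 hv); case: (v c).
Qed.

Lemma WX : W 'X = Some g.
Proof.
apply: W_eq; last by exists 1%N; rewrite /term coefX /= (w1 hv) /= add0r mulr1n.
move=> [|[|i]]; rewrite /term coefX /= ?(w0 hv) //.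
by rewrite (w1 hv) /= add0r mulr1n le_refl.
Qed.

Lemma W_None (f : {poly K}) : W f = None <-> f = 0.
Proof.
split; last by move=> ->; exact: W0.
move=> e; apply/eqP; apply: contraT => nz.
have hl : lead_coef f != 0 by rewrite lead_coef_eq0.
case: (wnz hv _ hl) => x ex.
have := W_lb f (size f).-1; rewrite e /term -/(lead_coef f) ex //.
Qed.

Lemma W_add (f : {poly K}) h : ole le (omin le (W f) (W h)) (W (f + h)).
Proof.
apply: W_glb => i; rewrite /term coefD.
apply: ole_trans hG _ (sh (g *+ i) (omin le (v f`_i) (v h`_i))) _ _ _; last first.
  rewrite ole_sh //; exact: (wult hv).
case: (omin_cases le (v f`_i) (v h`_i)) => ->.
  apply: ole_trans hG _ _ _ (omin_l hG _ _) (W_lb _ _).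
apply: ole_trans hG _ _ _ (omin_r hG _ _) (W_lb _ _).
Qed.

Lemma term_lb (f : {poly K}) A j : W f = Some A -> ole le (Some (A - g *+ j)) (v f`_j).
Proof. by move=> e; rewrite -ole_Some_sh // -e; apply: W_lb. Qed.

Lemma W_mul (f : {poly K}) h : W (f * h) = oadd (W f) (W h).
Proof.
have [->|fnz] := eqVneq f 0; first by rewrite mul0r W0.
have [->|hnz] := eqVneq h 0; first by rewrite mulr0 W0; case: (W f).
case ef: (W f) => [A|]; last by move/W_None: ef => ef; rewrite ef eqxx in fnz.
case eh: (W h) => [B|]; last by move/W_None: eh => eh; rewrite eh eqxx in hnz.
have exf : exists i, term f i == Some A by case: (W_att f) => i e; exists i; rewrite -e ef.
have exh : exists i, term h i == Some B by case: (W_att h) => i e; exists i; rewrite -e eh.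
case: (ex_minnP exf) => i0 /eqP Pi0 mini0.
case: (ex_minnP exh) => j0 /eqP Pj0 minj0.
have vf : forall j, (j < i0)%N -> olt le (Some (A - g *+ j)) (v f`_j).
  move=> j hj; rewrite -olt_Some_sh //; apply: (ole_neq_olt hG).
    by rewrite -ef; apply: W_lb.
  apply/negP => /eqP e; move: (mini0 j); rewrite e eqxx => /(_ isT).
  by rewrite leqNgt hj.
have vh : forall j, (j < j0)%N -> olt le (Some (B - g *+ j)) (v h`_j).
  move=> j hj; rewrite -olt_Some_sh //; apply: (ole_neq_olt hG).
    by rewrite -eh; apply: W_lb.
  apply/negP => /eqP e; move: (minj0 j); rewrite e eqxx => /(_ isT).
  by rewrite leqNgt hj.
apply: W_eq.
  move=> k; rewrite ole_Some_sh // /term coefM; apply: (w_sum_ge hG hv) => j _.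
  have ek : g *+ k = g *+ j + g *+ (k - j) by rewrite -mulrnDr subnKC // -ltnS.
  rewrite (wM hv) ek -subDD.
  exact: (oadd_le hG _ _ _ _ (term_lb f A j ef) (term_lb h B (k - j) eh)).
exists (i0 + j0)%N; rewrite /term coefM.
have hi0 : (i0 < (i0 + j0).+1)%N by rewrite ltnS leq_addr.
rewrite (bigD1 (Ordinal hi0)) //= addKn.
have ei0 : v f`_i0 = Some (A - g *+ i0).
  by move: Pi0; rewrite /term; case: (v f`_i0) => //= x [<-]; rewrite addrK.
have ej0 : v h`_j0 = Some (B - g *+ j0).
  by move: Pj0; rewrite /term; case: (v h`_j0) => //= x [<-]; rewrite addrK.
rewrite (w_dom hG hv _ _ (A + B - g *+ (i0 + j0))) /=.
- by rewrite subrK.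
- by rewrite (wM hv) ei0 ej0 /= subDD mulrnDr.
apply: (w_sum_gt hG hv) => j /negP hj; rewrite (wM hv).
have hjk : (j <= i0 + j0)%N by rewrite -ltnS.
have ek : g *+ (i0 + j0) = g *+ j + g *+ (i0 + j0 - j) by rewrite -mulrnDr subnKC.
rewrite ek -subDD.
case: (ltngtP j i0) => hji.
- exact: (oadd_lt hG _ _ _ _ (vf j hji) (term_lb h B _ eh)).
- have hh : (i0 + j0 - j < j0)%N by rewrite ltn_subLR // ltn_add2r.
  have := oadd_lt hG _ _ _ _ (vh _ hh) (term_lb f A j ef).
  by case: (v f`_j) => [x|]; case: (v h`_(i0 + j0 - j)) => [y|] //=;
    rewrite [B - _ + _]addrC [y + x]addrC.
- by exfalso; apply: hj; apply/eqP; apply: val_inj.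
Qed.

Lemma W_val : is_valuation le W.
Proof.
split.
- exact: W_None.
- by rewrite -polyC1 WC (w1 hv).
- exact: W_mul.
- exact: W_add.
Qed.
End Gauss.

Section Transfer.
Variables (G H : zmodType) (leG : rel G) (leH : rel H) (f : G -> H).
Hypothesis hG : is_oag leG.
Hypothesis hH : is_oag leH.
Hypothesis fadd : forall x y, f (x + y) = f x + f y.
Hypothesis fle : forall x y, leH (f x) (f y) = leG x y.
Variables (R : nzRingType) (w : R -> option G) (hw : is_valuation leG w).

Lemma ole_omap a b : ole leH (omap f a) (omap f b) = ole leG a b.
Proof. by case: a; case: b => //= x y; rewrite fle. Qed.
Lemma omin_omap a b : omap f (omin leG a b) = omin leH (omap f a) (omap f b).
Proof. by rewrite /omin ole_omap; case: (ole leG a b). Qed.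
Lemma transfer_val : is_valuation leH (fun x => omap f (w x)).
Proof.
case: hw => h1 h2 h3 h4; split.
- move=> a; case: (h1 a) => i1 i2; case e: (w a) => [x|] /=; split => //.
    by move/i2; rewrite e.
  by move=> _; apply: i1.
- by rewrite h2 /= (f0 _ _ _ fadd).
- by move=> a b; rewrite h3; case: (w a); case: (w b) => //= x y; rewrite fadd.
- by move=> a b; rewrite -omin_omap ole_omap.
Qed.
End Transfer.

Lemma ltofS (G : zmodType) (le : rel G) (x y : G) :
  ltof (ole le) (Some x) (Some y) = lt le x y.
Proof. by []. Qed.

Lemma subsub (G : zmodType) (a b c d : G) : (a - b) - (c - d) = (a - c) - (b - d).
Proof. by rewrite !opprB addrACA [RHS]addrACA; congr (_ + _); rewrite addrC. Qed.

Lemma polyE (K : fieldType) (f : {poly K}) :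
  f = \sum_(i < size f) (f`_i)%:P * 'X^i.
Proof.
by rewrite -{1}[f]coefK poly_def; apply: eq_bigr => i _; rewrite mul_polyC.
Qed.

Section Main.
Variables (K : fieldType) (Gam : zmodType) (leG : rel Gam) (v : K -> option Gam).
Hypotheses (hG : is_oag leG) (hv : is_valuation leG v)
  (hvsurj : forall g : Gam, exists2 a : K, a != 0 & v a = Some g)
  (hnontriv : exists g : Gam, g != 0).
Variables (GamQ : zmodType) (leQ : rel GamQ) (jQ : Gam -> GamQ).
Hypothesis (hQ : divisible_hull leG leQ jQ).
Variables (Gam' : zmodType) (leG' : rel Gam').
Hypothesis (hG' : is_oag leG').
Variable (iota : Gam -> Gam').
Hypotheses (hiota_add : forall x y, iota (x + y) = iota x + iota y)
  (hiota_le : forall x y, leG' (iota x) (iota y) = leG x y).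
Variables (Gam'Q : zmodType) (leQ' : rel Gam'Q) (jQ' : Gam' -> Gam'Q).
Hypothesis (hQ' : divisible_hull leG' leQ' jQ').
Variable (iotaQ : GamQ -> Gam'Q).
Hypotheses (hiotaQ_add : forall x y, iotaQ (x + y) = iotaQ x + iotaQ y)
  (hiotaQ_comp : forall g, iotaQ (jQ g) = jQ' (iota g)).
Variable (eta : {poly K} -> option Gam').
Hypotheses (heta : is_valuation leG' eta)
  (heta_ext : forall c : K, eta c%:P = omap iota (v c)).

Let hQo : is_oag leQ. Proof. by case: hQ. Qed.
Let jQadd : forall x y, jQ (x + y) = jQ x + jQ y. Proof. by case: hQ. Qed.
Let jQle : forall x y, leQ (jQ x) (jQ y) = leG x y. Proof. by case: hQ. Qed.
Let Qdiv : forall (h : GamQ) (n : nat), (0 < n)%N -> exists h' : GamQ, h' *+ n = h.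
Proof. by case: hQ. Qed.
Let Qden : forall h : GamQ, exists n : nat, (0 < n)%N /\ exists g : Gam, jQ g = h *+ n.
Proof. by case: hQ. Qed.
Let hQ'o : is_oag leQ'. Proof. by case: hQ'. Qed.
Let jQ'add : forall x y, jQ' (x + y) = jQ' x + jQ' y. Proof. by case: hQ'. Qed.
Let jQ'le : forall x y, leQ' (jQ' x) (jQ' y) = leG' x y. Proof. by case: hQ'. Qed.
Let Q'div : forall (h : Gam'Q) (n : nat), (0 < n)%N -> exists h' : Gam'Q, h' *+ n = h.
Proof. by case: hQ'. Qed.

Lemma zid (G : zmodType) (B A D I : G) : (B - A) - (D - I) = (B + I) - (A + D).
Proof. rewrite opprB addrACA; congr (_ + _); by rewrite opprD. Qed.

Definition e := if eta 'X is Some x then x else 0.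
Lemma eXE : eta 'X = Some e.
Proof.
rewrite /e; case: (wnz heta 'X) => [|x ->] //; by rewrite polyX_eq0.
Qed.
Lemma etaXn n : eta ('X^n) = Some (e *+ n).
Proof. exact: wXn heta _ _ _ eXE. Qed.
Lemma eta_term c i : eta (c%:P * 'X^i) = oadd (omap iota (v c)) (Some (e *+ i)).
Proof. by rewrite (wM heta) heta_ext etaXn. Qed.

Lemma iotaQ_le a b : leQ' (iotaQ a) (iotaQ b) = leQ a b.
Proof.
case: (Qden a) => n1 [n1p [g1 e1]]; case: (Qden b) => n2 [n2p [g2 e2]].
have np : (0 < n1 * n2)%N by rewrite muln_gt0 n1p n2p.
rewrite -(le2Mn hQ'o _ _ _ np) -(le2Mn hQo _ _ _ np).
have ea : a *+ (n1 * n2) = jQ (g1 *+ n2) by rewrite mulrnA -e1 (fMn _ _ _ jQadd).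
have eb : b *+ (n1 * n2) = jQ (g2 *+ n1) by rewrite mulnC mulrnA -e2 (fMn _ _ _ jQadd).
by rewrite -!(fMn _ _ _ hiotaQ_add) ea eb !hiotaQ_comp jQ'le hiota_le jQle.
Qed.

Definition P2 := forall gam : GamQ, lt leQ' (jQ' e) (iotaQ gam).
Definition P2' := forall (h : Gam) (n : nat), (0 < n)%N -> lt leG' (e *+ n) (iota h).

Lemma P2_P2' : P2 -> P2'.
Proof.
move=> p2 h n np; case: (Qdiv (jQ h) n np) => gam eg.
have := ltMn hQ'o _ _ _ np (p2 gam).
rewrite -(fMn _ _ _ hiotaQ_add) eg hiotaQ_comp -(fMn _ _ _ jQ'add).
by rewrite (flt _ _ _ _ _ hG' hQ'o jQ'le).
Qed.

Lemma P2'_P2 : P2' -> P2.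
Proof.
move=> p2 gam; case: (Qden gam) => n [np [h eh]].
rewrite -(lt2Mn hQ'o _ _ _ np) -(fMn _ _ _ hiotaQ_add) -eh hiotaQ_comp.
rewrite -(fMn _ _ _ jQ'add) (flt _ _ _ _ _ hG' hQ'o jQ'le).
exact: p2.
Qed.

Lemma P2Q : P2 -> forall n gam, (0 < n)%N -> lt leQ' (jQ' e *+ n) (iotaQ gam).
Proof.
move=> p2 n gam np.
case: (Qdiv gam n np) => g' <-; rewrite (fMn _ _ _ hiotaQ_add).
exact: ltMn hQ'o _ _ _ np (p2 g').
Qed.

Lemma L_dom : P2' -> forall f, f != 0 ->
  exists a, v (lead_coef f) = Some a /\ eta f = Some (iota a + e *+ (size f).-1).
Proof.
move=> p2 f fnz.
have hl : lead_coef f != 0 by rewrite lead_coef_eq0.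
case: (wnz hv _ hl) => a ea; exists a; split => //.
set d := (size f).-1.
have sf : size f = d.+1 by rewrite /d prednK // size_poly_gt0.
have ed : v f`_d = Some a by rewrite -ea lead_coefE.
rewrite [in LHS](polyE _ f) sf big_ord_recr /= addrC.
apply: (w_dom hG' heta _ _ (iota a + e *+ d)).
  by rewrite eta_term /= ed.
apply: (w_sum_gt hG' heta) => i _; rewrite eta_term.
case evi: (v _) => [b|] //=.
rewrite /olt /= -(lt_nle hG').
have hid : (i <= d)%N by apply: ltnW.
have dp : (0 < d - i)%N by rewrite subn_gt0.
have := p2 (b - a) (d - i)%N dp.
move=> hp; rewrite (lt_subr hG') -zid -(mulrnBr _ hid) -(fB _ _ _ hiota_add).
by rewrite -(lt_subr hG').
Qed.

Definition inV (mu : {poly K} -> option GamQ) : Prop :=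
  is_valuation leQ mu /\ (forall c : K, mu c%:P = omap jQ (v c)).
Definition S1 := forall (f : {poly K}) (mu : {poly K} -> option GamQ), inV mu ->
  ole leQ' (omap jQ' (eta f)) (omap iotaQ (mu f)).

Lemma T21 : P2 -> S1.
Proof.
move=> p2 f mu [hmu hmuC].
have [->|fnz] := eqVneq f 0; first by rewrite (w0 heta) (w0 hmu).
have p2' := P2_P2' p2.
case: (L_dom p2' _ fnz) => a [ea ef]; rewrite ef.
case: (wnz hmu _ fnz) => m em; rewrite em /=.
have Xnz : ('X : {poly K}) != 0 by rewrite polyX_eq0.
case: (wnz hmu _ Xnz) => q eq.
set d := (size f).-1.
have sf : size f = d.+1 by rewrite /d prednK // size_poly_gt0.
rewrite (le_nlt hQ'o); apply/negP => hlt.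
suff : olt leQ (Some m) (mu f) by rewrite em (olt_irr hQo).
rewrite [f in mu f](polyE _ f); apply: (w_sum_gt hQo hmu) => i _.
rewrite (wM hmu) (wXn hmu _ _ _ eq) hmuC.
case evi: (v f`_i) => [b|] //=.
rewrite /olt /= -(iotaQ_le); apply/negP => hle.
have h1 := le_lt_trans hQ'o _ _ _ hle hlt.
move: h1; rewrite (lt_nle hQ'o) => /negP; apply.
case: (posnP d) => [d0|dpos].
  have hi : (i < d.+1)%N by rewrite -sf ltn_ord.
  have i0 : nat_of_ord i = 0%N by move: hi; rewrite d0; case: (nat_of_ord i).
  move: evi ea; rewrite i0 lead_coefE -/d d0 => -> [->].
  by rewrite !mulr0n !addr0 hiotaQ_comp le_refl.
have eR : iotaQ (jQ b + q *+ i) = jQ' (iota a) + iotaQ (jQ (b - a) + q *+ i).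
  by rewrite -hiotaQ_comp -hiotaQ_add addrA -jQadd [a + _]addrC subrK.
rewrite eR jQ'add (fMn _ _ _ jQ'add) (le2Dl hQ'o).
exact: (ltW _ _ (P2Q p2 _ _ dpos)).
Qed.

Lemma pos_ex : exists d, lt leG 0 d.
Proof.
case: hnontriv => g0 g0nz.
case/orP: (le_total hG 0 g0) => h.
  by exists g0; rewrite /lt h eq_sym.
by exists (- g0); rewrite -oppr0 (lt_oppr hG) /lt h.
Qed.

Lemma small_ex h n : (0 < n)%N -> exists g, lt leG (g *+ n) h.
Proof.
move=> np; case: pos_ex => d dp.
have hn : lt leG (- (d *+ n)) 0.
  rewrite -oppr0 (lt_oppr hG) -(mul0rn _ n); exact: ltMn.
case/orP: (le_total hG 0 h) => hh.
  exists (- d); rewrite mulNrn; exact: lt_le_trans hG _ _ _ hn hh.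
exists (h - d); rewrite mulrnBl.
have : leG (h *+ n) h.
  case: n np {hn} => // n _; rewrite mulrS.
  have -> : leG (h + h *+ n) h = leG (h + h *+ n) (h + 0) by rewrite addr0.
  rewrite (le2Dl hG).
  by rewrite -(mul0rn _ n); apply: leMn.
move=> hle; have := ltD hG _ _ _ _ hn hle.
by rewrite add0r addrC.
Qed.

Lemma T12 : S1 -> P2.
Proof.
move=> s1 gam; case: (Qden gam) => n [np [h eh]].
case: (small_ex h n np) => g hg.
pose mu := fun f => omap jQ (W K Gam leG v g f).
have imu : inV mu.
  split; last by move=> c; rewrite /mu WC.
  apply: (transfer_val _ _ _ _ _ jQadd jQle); exact: W_val.
have := s1 'X mu imu; rewrite eXE /mu (WX _ _ _ hG _ hv) /= hiotaQ_comp => hle.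
rewrite -(lt2Mn hQ'o _ _ _ np) -(fMn _ _ _ hiotaQ_add) -eh hiotaQ_comp.
apply: le_lt_trans hQ'o _ _ _ (leMn hQ'o _ _ n hle) _.
rewrite -(fMn _ _ _ jQ'add) -(fMn _ _ _ hiota_add) (flt _ _ _ _ _ hG' hQ'o jQ'le).
by rewrite (flt _ _ _ _ _ hG hG' hiota_le).
Qed.

Definition EQV := equiv_val leG' eta (lexle leG) (mu_minf v).

Lemma mu1 : mu_minf v 1 = Some 0.
Proof. by rewrite /mu_minf lead_coef1 (w1 hv) size_poly1. Qed.

Lemma vg_mu f p : f != 0 -> mu_minf v f = Some p -> value_group (mu_minf v) p.
Proof.
move=> fnz ep; exists f; exists 1; exists p; exists 0; split => //; first exact: oner_neq0.
  exact: mu1.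
by rewrite subr0.
Qed.

Lemma mu_some f : f != 0 -> exists a, v (lead_coef f) = Some a /\ mu_minf v f = Some (- ((size f).-1)%:Z, a).
Proof.
move=> fnz; have hl : lead_coef f != 0 by rewrite lead_coef_eq0.
case: (wnz hv _ hl) => a ea; exists a; split => //.
by rewrite /mu_minf ea.
Qed.

Lemma T32 : EQV -> P2'.
Proof.
move=> [J [Jadd Jle Jvg Jsurj Jeq]] h n np.
case: (hvsurj h) => c cnz vc.
have Xnnz : ('X^n : {poly K}) != 0 by rewrite -size_poly_gt0 size_polyXn.
have cPnz : c%:P != 0 by rewrite polyC_eq0.
have m1 : mu_minf v 'X^n = Some (- (n%:Z), 0).
  by rewrite /mu_minf lead_coefXn (w1 hv) size_polyXn.
have m2 : mu_minf v c%:P = Some (- (0%:Z), h).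
  by rewrite /mu_minf lead_coefC vc size_polyC cnz.
have e1 := Jeq _ Xnnz; rewrite etaXn m1 /= in e1; case: e1 => e1.
have e2 := Jeq _ cPnz; rewrite heta_ext vc m2 /= in e2; case: e2 => e2.
have v1 := vg_mu _ _ Xnnz m1; have v2 := vg_mu _ _ cPnz m2.
rewrite e1 e2 /lt Jle // /lexle /= ltrN2 ltz_nat np /=.
apply/eqP => ee; have := Jle _ _ v2 v1; rewrite ee (le_refl hG') /lexle /=.
by rewrite ltrN2 ltz_nat ltn0 /= eqr_opp eqz_nat eq_sym eqn0Ngt np.
Qed.

Definition J (x : int * Gam) : Gam' := iota x.2 - e *~ x.1.
Lemma Jadd x y : J (x + y) = J x + J y.
Proof. by rewrite /J /= hiota_add mulrzDr opprD addrACA. Qed.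

Lemma Jle_all (p2 : P2') x y : leG' (J x) (J y) = lexle leG x y.
Proof.
rewrite (le_subr hG') -(fB _ _ _ Jadd) /J /= /lexle.
rewrite -subr_gt0 [x.1 == y.1]eq_sym -subr_eq0 (le_subr hG x.2).
move: (y.1 - x.1) (y.2 - x.2) => m u.
case: m => [[|k]|k].
- by rewrite mulr0z subr0 /= -(f0 _ _ _ hiota_add) hiota_le.
- rewrite -(le_subr hG') /=; apply: (ltW _ _ (p2 _ _ _)) => //.
- rewrite /= (le_nlt hG'); apply/negP; apply/negP.
  have := p2 (- u) k.+1 isT; rewrite (fN _ _ _ hiota_add) => hp.
  have := ltDr hG' _ _ (iota u) hp; rewrite addNr => hp2.
  by rewrite NegzE mulrNz opprK addrC.
Qed.

Lemma Jeq (p2 : P2') f : f != 0 -> eta f = omap J (mu_minf v f).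
Proof.
move=> fnz; case: (L_dom p2 _ fnz) => a [ea ef]; rewrite ef /mu_minf ea /= /J /=.
by rewrite mulrNz opprK -pmulrn.
Qed.

Lemma T23 : P2' -> EQV.
Proof.
move=> p2; exists J; split.
- by move=> x y _ _; apply: Jadd.
- by move=> x y _ _; apply: Jle_all.
- move=> x [a [b [X [Y [anz bnz ea eb ->]]]]].
  exists a, b, (J X), (J Y); split => //.
  + by rewrite (Jeq p2 _ anz) ea.
  + by rewrite (Jeq p2 _ bnz) eb.
  + exact: (fB _ _ _ Jadd).
- move=> y [a [b [X [Y [anz bnz ea eb ->]]]]].
  case: (mu_some _ anz) => a1 [_ ma]; case: (mu_some _ bnz) => b1 [_ mb].
  have := Jeq p2 _ anz; rewrite ea ma => -[->].
  have := Jeq p2 _ bnz; rewrite eb mb => -[->].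
  exists ((- ((size a).-1)%:Z, a1) - (- ((size b).-1)%:Z, b1)).
    by exists a, b, (- ((size a).-1)%:Z, a1), (- ((size b).-1)%:Z, b1).
  exact: (fB _ _ _ Jadd).
- exact: Jeq.
Qed.

Lemma main_sec :
  let inV (mu : {poly K} -> option GamQ) : Prop :=
    is_valuation leQ mu /\ (forall c : K, mu c%:P = omap jQ (v c)) in
  [/\ (forall (f : {poly K}) (mu : {poly K} -> option GamQ), inV mu ->
         ole leQ' (omap jQ' (eta f)) (omap iotaQ (mu f)))
      <-> (forall gam : GamQ,
         ltof (ole leQ') (omap jQ' (eta 'X)) (Some (iotaQ gam))),
      (forall gam : GamQ,
         ltof (ole leQ') (omap jQ' (eta 'X)) (Some (iotaQ gam)))
      <-> equiv_val leG' eta (lexle leG) (mu_minf v) &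
      (forall (f : {poly K}) (mu : {poly K} -> option GamQ), inV mu ->
         ole leQ' (omap jQ' (eta f)) (omap iotaQ (mu f)))
      <-> equiv_val leG' eta (lexle leG) (mu_minf v)].
Proof.
move=> inV0.
have E2 : (forall gam : GamQ,
         ltof (ole leQ') (omap jQ' (eta 'X)) (Some (iotaQ gam))) <-> P2.
  by rewrite eXE.
have E1 : (forall (f : {poly K}) (mu : {poly K} -> option GamQ), inV0 mu ->
         ole leQ' (omap jQ' (eta f)) (omap iotaQ (mu f))) <-> S1.
  by [].
have h12 : S1 <-> P2 by split; [exact: T12 | exact: T21].
have h23 : P2 <-> EQV by split => h; [apply: T23; exact: P2_P2' | apply: P2'_P2; exact: T32].
case: E1 => E1a E1b; case: E2 => E2a E2b; case: h12 => a12 b12; case: h23 => a23 b23.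
split; split => h.
- exact: E2b (a12 (E1a h)).
- exact: E1b (b12 (E2a h)).
- exact: a23 (E2a h).
- exact: E2b (b23 h).
- exact: a23 (a12 (E1a h)).
- exact: E1b (b12 (b23 h)).
Qed.
End Main.

Theorem mainTheorem1
  (K : fieldType) (Gam : zmodType) (leG : rel Gam) (v : K -> option Gam)
  (hG : is_oag leG) (hv : is_valuation leG v)
  (hvsurj : forall g : Gam, exists2 a : K, a != 0 & v a = Some g)
  (hnontriv : exists g : Gam, g != 0)
  (GamQ : zmodType) (leQ : rel GamQ) (jQ : Gam -> GamQ)
  (hQ : divisible_hull leG leQ jQ)
  (Gam' : zmodType) (leG' : rel Gam') (hG' : is_oag leG')
  (iota : Gam -> Gam')
  (hiota_add : forall x y, iota (x + y) = iota x + iota y)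
  (hiota_le : forall x y, leG' (iota x) (iota y) = leG x y)
  (Gam'Q : zmodType) (leQ' : rel Gam'Q) (jQ' : Gam' -> Gam'Q)
  (hQ' : divisible_hull leG' leQ' jQ')
  (iotaQ : GamQ -> Gam'Q)
  (hiotaQ_add : forall x y, iotaQ (x + y) = iotaQ x + iotaQ y)
  (hiotaQ_comp : forall g, iotaQ (jQ g) = jQ' (iota g))
  (eta : {poly K} -> option Gam')
  (heta : is_valuation leG' eta)
  (heta_ext : forall c : K, eta c%:P = omap iota (v c)) :
  let inV (mu : {poly K} -> option GamQ) : Prop :=
    is_valuation leQ mu /\ (forall c : K, mu c%:P = omap jQ (v c)) in
  [/\ (* (1) <-> (2) *)
      (forall (f : {poly K}) (mu : {poly K} -> option GamQ), inV mu ->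
         ole leQ' (omap jQ' (eta f)) (omap iotaQ (mu f)))
      <-> (forall gam : GamQ,
         ltof (ole leQ') (omap jQ' (eta 'X)) (Some (iotaQ gam))),
      (* (2) <-> (3) *)
      (forall gam : GamQ,
         ltof (ole leQ') (omap jQ' (eta 'X)) (Some (iotaQ gam)))
      <-> equiv_val leG' eta (lexle leG) (mu_minf v) &
      (* (1) <-> (3) *)
      (forall (f : {poly K}) (mu : {poly K} -> option GamQ), inV mu ->
         ole leQ' (omap jQ' (eta f)) (omap iotaQ (mu f)))
      <-> equiv_val leG' eta (lexle leG) (mu_minf v)].
Proof.
by apply: main_sec.
Qed.
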